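(* Let $\Delta$, $\Gamma$ be arbitrary contexts, both possibly containing locks, $A$ an arbitrary type, and $t$ a term of type $A$ of $\mathrm{IK}_C$ (or $\mathrm{IS4}_C$) in the concatenated context $\Delta, \Gamma$ that does not mention any variables from $\Delta$. Then there is a term $t'$ of type $A$ in context $\Gamma$ of $\mathrm{IK}_C$ (or $\mathrm{IS4}_C$, respectively).
   Context: Types $A::=\iota\mid A\to B\mid\Box A$; contexts $\Gamma::=\cdot\mid\Gamma,A\mid\Gamma,\mathsf{lock}$ ($\mathsf{lock}$ the context lock); $\Delta,\Gamma$ denotes context concatenation. Both calculi have STLC terms plus $\mathsf{box}\,t:\Box A$ in $\Gamma$ from $t:A$ in $\Gamma,\mathsf{lock}$, and $\mathsf{unbox}(t,e):A$ in $\Gamma$ from $t:\Box A$ in $\Delta$ and $e:\Delta\mathrel{R}\Gamma$, where in $\mathrm{IK}_C$, $\Delta\mathrel{R}\Gamma$ means $\Gamma=\Delta,\mathsf{lock},\Delta'$ with $\Delta'$ lock-free, and in $\mathrm{IS4}_C$ it means $\Gamma$ extends $\Delta$ by any types and locks. Both calculi have normalization functions (via NbE) into $\beta\eta$-normal forms, which do not introduce new free variables. *)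

(* Defs.v *)
From Stdlib Require Import Arith.

Inductive ty : Type :=
| iota : ty
| arr : ty -> ty -> ty
| boxT : ty -> ty.

(* Contexts grow to the right:  cext G A  is  "G, A",  clock G  is  "G, lock". *)
Inductive ctx : Type :=
| cnil : ctx
| cext : ctx -> ty -> ctx
| clock : ctx -> ctx.

Fixpoint cconcat (D G : ctx) : ctx :=
  match G with
  | cnil => D
  | cext G' A => cext (cconcat D G') A
  | clock G' => clock (cconcat D G')
  end.

Fixpoint lock_free (G : ctx) : Prop :=
  match G with
  | cnil => True
  | cext G' _ => lock_free G'
  | clock _ => False
  end.

Fixpoint ntypes (G : ctx) : nat :=
  match G with
  | cnil => 0
  | cext G' _ => S (ntypes G')
  | clock G' => ntypes G'
  end.

(* Terms, with de Bruijn variables counting only type entries, from the right.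
   unbox t e carries the context extension e (the suffix added to the context of t). *)
Inductive tm : Type :=
| var : nat -> tm
| lam : tm -> tm
| app : tm -> tm -> tm
| box : tm -> tm
| unbox : tm -> ctx -> tm.

Inductive calculus : Type := IK_C | IS4_C.

(* Admissible extensions e with  G = D, e  for  D R G. *)
Definition ext_ok (c : calculus) (e : ctx) : Prop :=
  match c with
  | IK_C => exists e', e = cconcat (clock cnil) e' /\ lock_free e'
  | IS4_C => True
  end.

(* Variable lookup: x : A in G, with no lock to the right of x. *)
Inductive Var : ctx -> nat -> ty -> Prop :=
| Var_zero : forall G A, Var (cext G A) 0 A
| Var_succ : forall G n A B, Var G n A -> Var (cext G B) (S n) A.

Inductive typed (c : calculus) : ctx -> tm -> ty -> Prop :=
| T_var : forall G n A, Var G n A -> typed c G (var n) A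
| T_lam : forall G t A B, typed c (cext G A) t B -> typed c G (lam t) (arr A B)
| T_app : forall G t u A B, typed c G t (arr A B) -> typed c G u A ->
    typed c G (app t u) B
| T_box : forall G t A, typed c (clock G) t A -> typed c G (box t) (boxT A)
| T_unbox : forall D e t A, typed c D t (boxT A) -> ext_ok c e ->
    typed c (cconcat D e) (unbox t e) A.

(* mentions_from t k : t (in its ambient context) has a free variable whose index
   is >= k, i.e. refers to a type entry lying to the left of the last k type entries. *)
Fixpoint mentions_from (t : tm) (k : nat) : Prop :=
  match t with
  | var n => k <= n
  | lam t' => mentions_from t' (S k)
  | app t1 t2 => mentions_from t1 k \/ mentions_from t2 k
  | box t' => mentions_from t' k
  | unbox t' e => mentions_from t' (k - ntypes e)
  end.

(* Main.v *)
Require Import Defs.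
From Stdlib Require Import Arith Lia.

Lemma cconcat_assoc (a b d : ctx) : cconcat a (cconcat b d) = cconcat (cconcat a b) d.
Proof. induction d; simpl; congruence. Qed.

Lemma cconcat_nil_l (G : ctx) : cconcat cnil G = G.
Proof. induction G; simpl; congruence. Qed.

Lemma lf_concat (a b : ctx) : lock_free a -> lock_free b -> lock_free (cconcat a b).
Proof. intros Ha; induction b; simpl; auto. Qed.

Lemma ntypes_concat (a b : ctx) : ntypes (cconcat a b) = ntypes a + ntypes b.
Proof. induction b; simpl; lia. Qed.

Lemma ext_ok_lf (c : calculus) (e D : ctx) : ext_ok c e -> lock_free D -> ext_ok c (cconcat e D).
Proof.
  destruct c; simpl; auto. intros [e' [-> He']] HD.
  exists (cconcat e' D). split. symmetry; apply cconcat_assoc. apply lf_concat; auto.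
Qed.

Lemma ext_ok_lock (c : calculus) : ext_ok c (clock cnil).
Proof. destruct c; simpl; auto. exists cnil. simpl. auto. Qed.

Lemma var_lemma (G D : ctx) (A : ty) : lock_free D -> Var (cconcat (cext G A) D) (ntypes D) A.
Proof.
  induction D; simpl; intros H.
  - constructor.
  - constructor. auto.
  - contradiction.
Qed.

Definition le (w w' : option ctx) : Prop :=
  match w, w' with
  | Some G, Some G' => exists D, G' = cconcat G D /\ lock_free D
  | None, None => True
  | _, _ => False
  end.

Definition R (c : calculus) (v w : option ctx) : Prop :=
  match v, w with
  | None, _ => True
  | Some a, Some b => exists e, b = cconcat a e /\ ext_ok c e
  | Some _, None => False
  end.

Definition Ne (c : calculus) (A : ty) (G : ctx) : Prop :=
  forall D, lock_free D -> exists t, typed c (cconcat G D) t A.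

Fixpoint sem (c : calculus) (A : ty) (w : option ctx) : Prop :=
  match A with
  | iota => match w with Some G => Ne c iota G | None => True end
  | arr A B => forall w', le w w' -> sem c A w' -> sem c B w'
  | boxT A => forall w' w'', le w w' -> R c w' w'' -> sem c A w''
  end.

Fixpoint envk (c : calculus) (k : nat) (G : ctx) (w : option ctx) : Prop :=
  match G with
  | cnil => True
  | cext G' A => envk c (pred k) G' w /\ (0 < k -> sem c A w)
  | clock G' => exists v, R c v w /\ envk c k G' v
  end.

Lemma le_refl w : le w w.
Proof. destruct w; simpl; auto. exists cnil; simpl; auto. Qed.

Lemma le_trans w1 w2 w3 : le w1 w2 -> le w2 w3 -> le w1 w3.
Proof.
  destruct w1, w2, w3; simpl; try tauto.
  intros [D1 [-> H1]] [D2 [-> H2]]. exists (cconcat D1 D2).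
  split. symmetry; apply cconcat_assoc. apply lf_concat; auto.
Qed.

Lemma frame c v w w' : R c v w -> le w w' -> exists v', le v v' /\ R c v' w'.
Proof.
  destruct v as [a|].
  - destruct w as [b|]; simpl; [|tauto]. destruct w' as [b'|]; simpl; [|tauto].
    intros [e [-> He]] [D [-> HD]]. exists (Some a). split. apply (le_refl (Some a)).
    simpl. exists (cconcat e D). split. symmetry; apply cconcat_assoc. apply ext_ok_lf; auto.
  - intros _ _. exists None. simpl. auto.
Qed.

Lemma sem_mono c A : forall w w', sem c A w -> le w w' -> sem c A w'.
Proof.
  induction A; intros w w' H Hle.
  - destruct w as [G|], w' as [G'|]; simpl in *; try tauto.
    destruct Hle as [D1 [-> H1]]. intros D2 H2.
    rewrite <- cconcat_assoc. apply H. apply lf_concat; auto.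
  - simpl in *. intros w'' H1 H2. apply H; auto. eapply le_trans; eauto.
  - simpl in *. intros w2 w3 H1 H2. apply (H w2 w3); [eapply le_trans; eauto | exact H2].
Qed.

Lemma env_mono c G : forall k w w', envk c k G w -> le w w' -> envk c k G w'.
Proof.
  induction G; simpl; intros k w w' H Hle; auto.
  - destruct H as [H1 H2]. split. eauto. intros Hk. eapply sem_mono; eauto.
  - destruct H as [v [Hv Henv]]. destruct (frame _ _ _ _ Hv Hle) as [v' [H1 H2]].
    exists v'. split; eauto.
Qed.

Lemma env_zero c G : forall w, envk c 0 G w.
Proof.
  induction G; simpl; intros w; auto.
  - split; auto. intros H; lia.
  - exists None. simpl. auto.
Qed.

Lemma env_lf c e : forall G k w, lock_free e -> envk c k (cconcat G e) w -> envk c (k - ntypes e) G w.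
Proof.
  induction e; simpl; intros G k w Hlf H.
  - rewrite Nat.sub_0_r. auto.
  - destruct H as [H _]. replace (k - S (ntypes e)) with (pred k - ntypes e) by lia. auto.
  - contradiction.
Qed.

Lemma env_s4 e : forall G k w, envk IS4_C k (cconcat G e) w ->
  exists v, R IS4_C v w /\ envk IS4_C (k - ntypes e) G v.
Proof.
  induction e; simpl; intros G k w H.
  - exists w. rewrite Nat.sub_0_r. split; auto. destruct w; simpl; auto.
    exists cnil; simpl; auto.
  - destruct H as [H _]. destruct (IHe _ _ _ H) as [v [Hv Henv]]. exists v. split; auto.
    replace (k - S (ntypes e)) with (pred k - ntypes e) by lia. auto.
  - destruct H as [v' [Hv' H]]. destruct (IHe _ _ _ H) as [v [Hv Henv]].
    exists v. split; auto.
    destruct v as [a|]; simpl; auto. destruct v' as [b|]; simpl in Hv; [|contradiction].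
    destruct w as [d|]; simpl in Hv'; [|contradiction].
    destruct Hv as [e1 [-> _]]. destruct Hv' as [e2 [-> _]].
    exists (cconcat e1 e2). split; auto. symmetry; apply cconcat_assoc.
Qed.

Lemma env_unbox c D e k w : envk c k (cconcat D e) w -> ext_ok c e ->
  exists v, R c v w /\ envk c (k - ntypes e) D v.
Proof.
  destruct c; intros H Hok.
  - simpl in Hok. destruct Hok as [e' [-> Hlf]].
    rewrite cconcat_assoc in H. simpl in H.
    pose proof (env_lf _ _ _ _ _ Hlf H) as H'. simpl in H'.
    rewrite ntypes_concat. simpl. exact H'.
  - apply env_s4; auto.
Qed.

Lemma var_sound c G n A : Var G n A -> forall k w, n < k -> envk c k G w -> sem c A w.
Proof.
  induction 1; simpl; intros k w Hk HE.
  - apply HE. lia.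
  - destruct HE as [H1 _]. apply (IHVar (pred k) w); auto. lia.
Qed.

Lemma sound c G t A : typed c G t A -> forall k w, envk c k G w -> ~ mentions_from t k -> sem c A w.
Proof.
  induction 1; simpl; intros k w Henv Hm.
  - apply (var_sound c G n A H k w); auto. lia.
  - intros w' Hle HA. apply (IHtyped (S k)); auto. simpl. split; auto.
    eapply env_mono; eauto.
  - specialize (IHtyped1 k w Henv (fun h => Hm (or_introl h))).
    specialize (IHtyped2 k w Henv (fun h => Hm (or_intror h))).
    simpl in IHtyped1. apply IHtyped1; auto. apply le_refl.
  - intros w' w'' Hle HR. apply (IHtyped k); auto. simpl. exists w'. split; auto.
    eapply env_mono; eauto.
  - destruct (env_unbox _ _ _ _ _ Henv H0) as [v [Hv Henv']].
    specialize (IHtyped _ _ Henv' Hm). simpl in IHtyped.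
    eapply IHtyped; eauto. apply le_refl.
Qed.

Lemma reflect_reify c A :
  (forall G, Ne c A G -> sem c A (Some G)) /\ (forall G, sem c A (Some G) -> exists t, typed c G t A).
Proof.
  induction A as [|A [rfA rrA] B [rfB rrB]|A [rfA rrA]]; split; simpl.
  - auto.
  - intros G H. destruct (H cnil I) as [t Ht]. eauto.
  - intros G HN w' Hle HA. destruct w' as [G'|]; [|contradiction].
    destruct Hle as [D1 [-> H1]]. apply rfB. intros D2 H2.
    destruct (HN (cconcat D1 D2) (lf_concat _ _ H1 H2)) as [f Hf].
    assert (HA' : sem c A (Some (cconcat (cconcat G D1) D2))).
    { eapply sem_mono; eauto. simpl. eauto. }
    destruct (rrA _ HA') as [a Ha]. exists (app f a).
    rewrite cconcat_assoc in Hf. econstructor; eauto.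
  - intros G H. assert (Hle : le (Some G) (Some (cext G A))).
    { simpl. exists (cext cnil A). simpl. auto. }
    assert (HA : sem c A (Some (cext G A))).
    { apply rfA. intros D HD. exists (var (ntypes D)). constructor. apply var_lemma; auto. }
    destruct (rrB _ (H (Some (cext G A)) Hle HA)) as [t Ht]. exists (lam t). constructor; auto.
  - intros G HN w' w'' Hle HR. destruct w' as [G'|]; [|contradiction].
    destruct Hle as [D1 [-> H1]]. destruct w'' as [G''|]; [|contradiction].
    destruct HR as [e [-> He]]. apply rfA. intros D2 H2.
    destruct (HN D1 H1) as [s Hs]. exists (unbox s (cconcat e D2)).
    rewrite <- cconcat_assoc. constructor; auto. apply ext_ok_lf; auto.
  - intros G H.
    assert (HA : sem c A (Some (clock G))).
    { apply (H (Some G)). apply (le_refl (Some G)). simpl. exists (clock cnil). split; auto. apply ext_ok_lock. }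
    destruct (rrA _ HA) as [t Ht]. exists (box t). constructor; auto.
Qed.

Lemma env_init c D G : envk c (ntypes G) (cconcat D G) (Some G).
Proof.
  induction G; simpl.
  - apply env_zero.
  - split.
    + eapply env_mono; eauto. simpl. exists (cext cnil t). simpl; auto.
    + intros _. apply (proj1 (reflect_reify c t)). intros D0 HD0.
      exists (var (ntypes D0)). constructor. apply var_lemma; auto.
  - exists (Some G). split; auto. simpl. exists (clock cnil). split; auto. apply ext_ok_lock.
Qed.

Theorem lemma3 (c : calculus) (D G : ctx) (A : ty) (t : tm) :
  typed c (cconcat D G) t A ->
  ~ mentions_from t (ntypes G) ->
  exists t' : tm, typed c G t' A.
Proof.
  intros Ht Hm.
  apply (proj2 (reflect_reify c A)).
  eapply sound; eauto. apply env_init.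
Qed.
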